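(* Let $D$ be a non-commutative division ring which is algebraic over its center and weakly locally finite. Then the multiplicative group $D^*$ is not finitely generated.
   Context: A division ring is weakly locally finite if the division subring generated by any finite subset is finite dimensional over its own center; it is algebraic if every element is algebraic over the center. *)

(* Defs.v *)
From HB Require Import structures.
From mathcomp Require Import all_boot all_algebra.
Set Implicit Arguments. Unset Strict Implicit. Unset Printing Implicit Defensive.
Import GRing.Theory.
Local Open Scope ring_scope.

Definition is_division_ring (D : unitRingType) : Prop :=
  forall x : D, x != 0 -> x \is a GRing.unit.

Definition central (D : unitRingType) (z : D) : Prop := forall y : D, z * y = y * z.

Definition algebraic_over_center (D : unitRingType) : Prop :=
  forall x : D, exists p : {poly D},
    p != 0 /\ (forall i, central p`_i) /\ root p x.

Definition divring_closedP (D : unitRingType) (P : D -> Prop) : Prop :=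
  [/\ P 1,
      forall x y, P x -> P y -> P (x - y),
      forall x y, P x -> P y -> P (x * y)
    & forall x, P x -> x != 0 -> P x^-1].

Definition gen_divring (D : unitRingType) (S : seq D) (x : D) : Prop :=
  forall P : D -> Prop, divring_closedP P -> (forall s, s \in S -> P s) -> P x.

Definition center_of (D : unitRingType) (K : D -> Prop) (z : D) : Prop :=
  K z /\ forall y, K y -> z * y = y * z.

Definition findim_over_center (D : unitRingType) (K : D -> Prop) : Prop :=
  exists b : seq D, (forall v, v \in b -> K v) /\
    forall y, K y -> exists c : seq D,
      size c = size b /\ (forall z, z \in c -> center_of K z) /\
      y = \sum_(i < size b) c`_i * b`_i.

Definition weakly_locally_finite (D : unitRingType) : Prop :=
  forall S : seq D, findim_over_center (gen_divring S).

Definition gen_mulgroup (D : unitRingType) (g : seq D) (x : D) : Prop :=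
  forall P : D -> Prop, P 1 -> (forall x y, P x -> P y -> P (x * y)) ->
    (forall x, P x -> P x^-1) -> (forall s, s \in g -> P s) -> P x.

Definition units_fin_gen (D : unitRingType) : Prop :=
  exists g : seq D, (forall s, s \in g -> s != 0) /\
    forall x : D, x != 0 -> gen_mulgroup g x.

(* Main.v *)
From HB Require Import structures.
Require Import Defs.
From mathcomp Require Import all_boot all_algebra all_field.
From mathcomp Require Import boolp.
From Stdlib Require Import Classical ClassicalEpsilon.
Set Implicit Arguments. Unset Strict Implicit. Unset Printing Implicit Defensive.
Import GRing.Theory Num.Theory.
Local Open Scope ring_scope.

Lemma cover_of_bounded (T : eqType) (P : T -> Prop) (m : nat) :
  (forall s : seq T, uniq s -> (forall x, x \in s -> P x) -> (size s <= m)%N) ->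
  exists s : seq T, forall x, P x -> x \in s.
Proof.
move=> Hb; apply: NNPP => Hn.
have H : forall s : seq T, exists x, P x /\ x \notin s.
  move=> s; apply: NNPP => Hx; apply: Hn; exists s => x Px.
  by apply: NNPP => xs; apply: Hx; exists x; split => //; apply/negP.
have Hj : forall j, exists s : seq T, [/\ uniq s, (forall x, x \in s -> P x) & size s = j].
  elim=> [|j [s [us Ps ss]]]; first by exists [::].
  have [x [Px xs]] := H s; exists (x :: s); split => //=; first by rewrite xs.
    by move=> y; rewrite inE => /orP[/eqP->|/Ps].
  by rewrite ss.
have [s [us Ps ss]] := Hj m.+1.
by have := Hb s us Ps; rewrite ss ltnn.
Qed.

Lemma roots_cover (F : fieldType) (p : {poly F}) : p != 0 ->
  exists s : seq F, forall x, root p x -> x \in s.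
Proof.
move=> p0; apply: (@cover_of_bounded _ _ (size p)) => s us Ps.
apply: ltnW; apply: max_poly_roots => //; apply/allP => x /Ps.
by [].
Qed.

Lemma nroots_cover (F : fieldType) (n : nat) (L : seq F) : (0 < n)%N ->
  exists s : seq F, forall x, x ^+ n \in L -> x \in s.
Proof.
move=> n0; elim: L => [|h L [s Hs]]; first by exists [::].
have p0 : ('X^n - h%:P : {poly F}) != 0.
  by rewrite -size_poly_eq0 size_XnsubC.
have [s' Hs'] := roots_cover p0.
exists (s' ++ s) => x; rewrite inE mem_cat => /orP[/eqP xh|/Hs ->]; last by rewrite orbT.
by rewrite Hs' // /root !hornerE xh subrr.
Qed.
Lemma expz_mod (F : fieldType) (x : F) (r : nat) (e : int) : x != 0 -> (0 < r)%N -> x ^+ r = 1 ->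
  x ^ e = x ^+ `|(e %% r)%Z|%N.
Proof.
move=> x0 r0 xr.
have Hm : (e %% r)%Z = Posz `|(e %% r)%Z|%N.
  by rewrite gez0_abs // modz_ge0 // -lt0n.
rewrite {1}(divz_eq e r) expfzDr // -exprz_exp exprzAC.
rewrite (_ : x ^ (r : int) = 1) // exp1rz mul1r.
by rewrite {1}Hm.
Qed.

Lemma torsion_finite (F : fieldType) (n k : nat) (d : 'I_k -> F) : (0 < n)%N ->
  (forall i, d i != 0) ->
  (forall a : F, a != 0 -> exists e : 'I_k -> int, a ^+ n = \prod_i d i ^ e i) ->
  (forall a : F, a != 0 -> exists m, (0 < m)%N /\ a ^+ m = 1) ->
  exists s : seq F, forall a, a \in s.
Proof.
move=> n0 d0 He Ht.
have [r [r0 Hr]] : exists r, (0 < r)%N /\ forall i, d i ^+ r = 1.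
  suff : forall l : seq 'I_k, exists r, (0 < r)%N /\ forall i, i \in l -> d i ^+ r = 1.
    by move=> /(_ (enum 'I_k)) [r [r0 Hr]]; exists r; split=> // i; apply: Hr; rewrite mem_enum.
  elim=> [|i l [r [r0 Hr]]]; first by exists 1%N.
  have [m [m0 Hm]] := Ht _ (d0 i).
  exists (m * r)%N; split; first by rewrite muln_gt0 m0.
  move=> j; rewrite inE => /orP[/eqP->|/Hr jr]; first by rewrite exprM Hm expr1n.
  by rewrite mulnC exprM jr expr1n.
pose L := map (fun f : {ffun 'I_k -> 'I_r} => \prod_i d i ^+ f i) (enum {ffun 'I_k -> 'I_r}).
have [s Hs] := nroots_cover L n0.
exists (0 :: s) => a.
have [->|a0] := eqVneq a 0; first by rewrite mem_head.
rewrite in_cons; apply/orP; right; apply: Hs.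
have [e ->] := He a a0.
have Hlt : forall i, (`|(e i %% r)%Z| < r)%N.
  move=> i; have rz : (0 < r%:Z) by rewrite ltz_nat.
  have h := ltz_pmod (e i) rz.
  have m0 : (0 <= (e i %% r)%Z) by rewrite modz_ge0 // -lt0n.
  by rewrite -(gez0_abs m0) ltz_nat in h.
apply/mapP; exists [ffun i => Ordinal (Hlt i)]; first by rewrite mem_enum.
by apply: eq_bigr => i _; rewrite ffunE /= (expz_mod _ (d0 i) r0 (Hr i)).
Qed.
Lemma int_dep (k : nat) (E : 'I_k.+1 -> 'I_k -> int) :
  exists v : 'I_k.+1 -> int, (exists j, v j != 0) /\ forall i, \sum_j v j * E j i = 0.
Proof.
pose A : 'M[rat]_(k.+1, k) := \matrix_(j, i) (E j i)%:~R.
have : kermx A != 0.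
  rewrite kermx_eq0 /row_free; apply/negP => /eqP h.
  by have := rank_leq_col A; rewrite h ltnn.
case/rowV0Pn => v /sub_kermxP vA v0.
pose w (j : 'I_k.+1) : int := numq (v 0 j) * \prod_(l < k.+1 | l != j) denq (v 0 l).
have wE : forall j, (w j)%:~R = v 0 j * (\prod_l denq (v 0 l))%:~R :> rat.
  move=> j; rewrite /w (@intrM rat) numqE [in RHS](bigD1 j) //= (@intrM rat) mulrA.
  by congr (_ * _); rewrite rmorph_prod.
exists w; split.
  have [j vj] : exists j, v 0 j != 0.
    apply/existsP; move: v0; apply: contraR; rewrite negb_exists => /forallP h.
    by apply/eqP/rowP => j; rewrite mxE; apply/eqP/negPn/h.
  exists j; rewrite -(@intr_eq0 rat) wE mulf_neq0 // intr_eq0.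
  by apply/prodf_neq0 => l _; rewrite denq_neq0.
move=> i; apply/eqP; rewrite -(@intr_eq0 rat) rmorph_sum /=.
under eq_bigr => j _ do rewrite intrM wE.
have := congr1 (fun M : 'M[rat]_(1,k) => M 0 i) vA; rewrite !mxE => h.
under eq_bigr => j _ do rewrite mulrAC.
rewrite -mulr_suml (_ : \sum_j _ = 0) ?mul0r //.
by apply: etrans h; apply: eq_bigr => j _; rewrite mxE.
Qed.

Lemma prodz_exp (F : fieldType) (I : finType) (x : I -> F) (z : int) :
  (\prod_i x i) ^ z = \prod_i x i ^ z.
Proof.
by apply: (big_morph (fun y => y ^ z)) => [a b|]; rewrite ?expfzMl ?exp1rz.
Qed.

Lemma expz_sum (F : fieldType) (I : finType) (x : F) (e : I -> int) : x != 0 ->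
  x ^ (\sum_i e i) = \prod_i x ^ e i.
Proof.
move=> x0; apply: (big_morph (fun z => x ^ z)) => [a b|]; first by rewrite expfzDr.
by [].
Qed.

Lemma indep_contra (F : fieldType) (n k : nat) (d : 'I_k -> F) (u : 'I_k.+1 -> F) :
  (0 < n)%N -> (forall i, d i != 0) ->
  (forall j, exists e : 'I_k -> int, u j ^+ n = \prod_i d i ^ e i) ->
  exists w : 'I_k.+1 -> int, (exists j, w j != 0) /\ \prod_j u j ^ w j = 1.
Proof.
move=> n0 d0 He.
pose E j := proj1_sig (constructive_indefinite_description _ (He j)).
have HE : forall j, u j ^+ n = \prod_i d i ^ E j i.
  by move=> j; rewrite /E; case: constructive_indefinite_description.
have [v [[j vj] Hv]] := int_dep E.
exists (fun j => n%:Z * v j); split.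
  by exists j; rewrite mulf_neq0 // -lt0n.
transitivity (\prod_j \prod_i d i ^ (E j i * v j)).
  apply: eq_bigr => l _; rewrite -exprz_exp.
  have -> : u l ^ n%:Z = u l ^+ n by [].
  by rewrite HE prodz_exp; apply: eq_bigr => i _; rewrite exprz_exp.
rewrite exchange_big /=.
apply: big1 => i _; rewrite -expz_sum // (_ : \sum_j _ = 0) //.
by apply: etrans (Hv i); apply: eq_bigr => l _; rewrite mulrC.
Qed.

Definition zpos (z : int) : nat := if z is Posz m then m else 0%N.
Definition zneg (z : int) : nat := if z is Negz m then m.+1 else 0%N.

Lemma zpos_neg z : zpos z = 0%N \/ zneg z = 0%N.
Proof. by case: z; [right | left]. Qed.

Lemma zpos_neg0 z : zpos z = 0%N -> zneg z = 0%N -> z = 0.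
Proof. by case: z => // m /= ->. Qed.

Lemma split_relation (F : fieldType) K (u : 'I_K -> F) (w : 'I_K -> int) :
  (forall j, u j != 0) -> \prod_j u j ^ w j = 1 ->
  \prod_j u j ^+ zpos (w j) = \prod_j u j ^+ zneg (w j).
Proof.
move=> u0 h.
transitivity (\prod_j (u j ^ w j * u j ^+ zneg (w j))).
  apply: eq_bigr => j _; case: (w j) => m /=; first by rewrite mulr1.
  by rewrite mulVf // expf_neq0.
by rewrite big_split /= h mul1r.
Qed.

Fixpoint prs (m : nat) : nat :=
  if m is m'.+1 then sval (prime_above (prs m')) else 2.

Lemma prs_prime m : prime (prs m).
Proof. by case: m => //= m; case: prime_above. Qed.

Lemma prs_lt m : (prs m < prs m.+1)%N.
Proof. by rewrite /=; case: prime_above. Qed.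

Lemma prs_inj : injective prs.
Proof.
apply: incn_inj; apply: leq_mono; apply: homo_ltn; last exact: prs_lt.
exact: ltn_trans.
Qed.

Lemma nat_indep K (p : 'I_K -> nat) (a b : 'I_K -> nat) :
  (forall j, prime (p j)) -> injective p ->
  (forall j, a j = 0%N \/ b j = 0%N) ->
  (\prod_j p j ^ a j = \prod_j p j ^ b j)%N -> forall j, a j = 0%N.
Proof.
move=> pr inj ab h j; apply/eqP; rewrite eqn0Ngt; apply/negP => aj.
have bj : b j = 0%N by case: (ab j) => // a0; rewrite a0 in aj.
have : (p j %| \prod_l p l ^ b l)%N.
  by rewrite -h (bigD1 j) //= dvdn_mulr // dvdn_exp.
rewrite Euclid_dvd_prod // big_has_cond; case/hasP => l _ /andP[_].
rewrite Euclid_dvdX // dvdn_prime2 // => /andP[/eqP/inj jl].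
by rewrite -jl bj.
Qed.

Lemma natr_inj0 (F : fieldType) (a b : nat) : (forall m, (0 < m)%N -> m%:R != 0 :> F) ->
  a%:R = b%:R :> F -> a = b.
Proof.
move=> h.
wlog ab : a b / (a <= b)%N.
  move=> W e; case: (leqP a b) => [|/ltnW] ?; first exact: W.
  by apply/esym/W.
move=> e; apply/eqP; rewrite eqn_leq ab /= -subn_eq0; apply/negPn/negP => ba.
have := h (b - a)%N; rewrite lt0n ba natrB // e subrr eqxx; by move=> /(_ isT).
Qed.

Lemma char0_indep (F : fieldType) k : (forall m, (0 < m)%N -> m%:R != 0 :> F) ->
  exists u : 'I_k -> F, (forall j, u j != 0) /\
    forall w : 'I_k -> int, \prod_j u j ^ w j = 1 -> forall j, w j = 0.
Proof.
move=> h; exists (fun j : 'I_k => (prs j)%:R : F).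
have u0 : forall j : 'I_k, (prs j)%:R != 0 :> F by move=> j; apply: h; apply: prime_gt0; apply: prs_prime.
split => // w /(split_relation u0).
rewrite -!(eq_bigr _ (fun j _ => natrX _ _ _)) -!natr_prod => /(natr_inj0 h) e j.
apply: zpos_neg0.
  apply: (@nat_indep _ (fun j : 'I_k => prs j) (fun j => zpos (w j)) (fun j => zneg (w j))) => //.
  - by move=> l; apply: prs_prime.
  - by move=> x y /prs_inj /val_inj.
  - by move=> l; apply: zpos_neg.
apply: (@nat_indep _ (fun j : 'I_k => prs j) (fun j => zneg (w j)) (fun j => zpos (w j))) => //.
- by move=> l; apply: prs_prime.
- by move=> x y /prs_inj /val_inj.
- by move=> l; case: (zpos_neg (w l)); [right|left].
Qed.

Section Irr.
Variable K0 : fieldType.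
Implicit Types r q a b : {poly K0}.

Lemma irr_not_dvd1 r : irreducible_poly r -> ~~ (r %| 1).
Proof. by case=> s _; rewrite dvdp1 neq_ltn s orbT. Qed.

Lemma irr_dvd_or_coprime r q : irreducible_poly r -> (r %| q) || coprimep r q.
Proof.
move=> ir; have [g1|g1] := eqVneq (size (gcdp r q)) 1%N.
  by rewrite coprimep_def g1 eqxx orbT.
by rewrite -(eqp_dvdl _ (ir _ g1 (dvdp_gcdl r q))) dvdp_gcdr.
Qed.

Lemma irr_coprime_dvd r q : irreducible_poly r -> coprimep r q -> r %| q -> False.
Proof.
move=> ir cp rq; move/negP: (irr_not_dvd1 ir); apply.
have H : gcdp r q %= 1 by rewrite gcdp_eqp1.
by rewrite -(eqp_dvdr _ H) dvdp_gcd dvdpp rq.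
Qed.

Lemma irr_dvdM r a b : irreducible_poly r -> r %| a * b -> (r %| a) || (r %| b).
Proof.
move=> ir rab; case/orP: (irr_dvd_or_coprime a ir) => [->//|ca].
by rewrite (Gauss_dvdpr _ ca) in rab; rewrite rab orbT.
Qed.

Lemma irr_dvd_prod (I : Type) (s : seq I) (f : I -> {poly K0}) r :
  irreducible_poly r -> r %| \prod_(i <- s) f i -> has (fun i => r %| f i) s.
Proof.
move=> ir; elim: s => [|i s IH]; first by rewrite big_nil (negbTE (irr_not_dvd1 ir)).
by rewrite big_cons /= => /(irr_dvdM ir)/orP[->//|/IH->]; rewrite orbT.
Qed.

Lemma irr_dvdX r q m : irreducible_poly r -> r %| q ^+ m -> r %| q.
Proof.
move=> ir; elim: m => [|m IH]; first by rewrite expr0 (negbTE (irr_not_dvd1 ir)).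
by rewrite exprS => /(irr_dvdM ir)/orP[//|/IH].
Qed.

Lemma irr_dvd_irr r q : irreducible_poly r -> irreducible_poly q -> r %| q -> r %= q.
Proof. by move=> [sr _] iq rq; apply: iq => //; rewrite neq_ltn sr orbT. Qed.

Lemma irr_factor q : (1 < size q)%N -> exists r, irreducible_poly r /\ r %| q.
Proof.
move: {2}(size q) (leqnn (size q)) => N; elim: N q => [|N IH] q sq sq1.
  by move: (leq_trans sq1 sq).
apply: NNPP => Hn.
suff iq : irreducible_poly q by apply: Hn; exists q; split => //; exact: dvdpp.
split => // d d1 dq; apply: NNPP => dnq.
have q0 : q != 0 by rewrite -size_poly_gt0 (ltn_trans _ sq1).
have d0 : d != 0 by apply: contraNneq q0 => d0; move: dq; rewrite d0 dvd0p.
have sd1 : (1 < size d)%N.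
  by rewrite ltn_neqAle eq_sym d1 /= size_poly_gt0.
have sdq : (size d < size q)%N.
  rewrite ltn_neqAle dvdp_leq // andbT dvdp_size_eqp //.
  by apply/negP.
have sdN : (size d <= N)%N by rewrite -ltnS (leq_trans sdq sq).
have [r [ir rd]] := IH d sdN sd1.
by apply: Hn; exists r; split => //; apply: dvdp_trans rd dq.
Qed.

Lemma irr_family (K : nat) : exists r : nat -> {poly K0},
  (forall j, (j < K)%N -> irreducible_poly (r j)) /\
  (forall i j, (i < K)%N -> (j < K)%N -> r i %= r j -> i = j).
Proof.
elim: K => [|K [r [ir inj]]]; first by exists (fun _ => 0); split.
pose P := \prod_(j < K) r j.
have P0 : P != 0 by apply/prodf_neq0 => j _; apply: irredp_neq0; apply: ir.
have sq : (1 < size (P * 'X + 1)%R)%N.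
  rewrite size_polyDl size_mulX // ?size_poly1 ltnS lt0n size_poly_eq0 //.
have [s [irs sq']] := irr_factor sq.
have nas : forall j, (j < K)%N -> ~ s %= r j.
  move=> j jK sr; have : s %| P * 'X.
    rewrite (eqp_dvdl _ sr); apply: dvdp_mulr; rewrite /P (bigD1 (Ordinal jK)) //.
    exact: dvdp_mulIl.
  move=> sPX; move: sq'; rewrite dvdp_addr // => s1.
  by move/negP: (irr_not_dvd1 irs).
exists (fun j => if j == K then s else r j); split.
  move=> j; rewrite ltnS leq_eqVlt => /orP[/eqP->|jK]; first by rewrite eqxx.
  by rewrite ltn_eqF //; apply: ir.
move=> i j; rewrite ltnS leq_eqVlt => /orP[/eqP->|iK]; rewrite ltnS leq_eqVlt => /orP[/eqP->|jK].
- by move=> _.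
- by rewrite eqxx (ltn_eqF jK) => h; case: (nas j jK h).
- by rewrite eqxx (ltn_eqF iK) => h; case: (nas i iK); rewrite eqp_sym.
- by rewrite (ltn_eqF iK) (ltn_eqF jK); apply: inj.
Qed.

Lemma poly_indep M (r : 'I_M -> {poly K0}) (a b : 'I_M -> nat) :
  (forall j, irreducible_poly (r j)) -> (forall i j, r i %= r j -> i = j) ->
  (forall j, a j = 0%N \/ b j = 0%N) ->
  \prod_j r j ^+ a j = \prod_j r j ^+ b j -> forall j, a j = 0%N.
Proof.
move=> ir inj ab h j; apply/eqP; rewrite eqn0Ngt; apply/negP => aj.
have bj : b j = 0%N by case: (ab j) => // a0; rewrite a0 in aj.
have : r j %| \prod_l r l ^+ b l.
  rewrite -h (bigD1 j) //; apply: dvdp_mulr; exact: dvdp_exp.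
case/(irr_dvd_prod (ir j))/hasP => l _ rjl.
have jl := inj _ _ (irr_dvd_irr (ir j) (ir l) (irr_dvdX (ir j) rjl)).
move: rjl; rewrite -jl bj expr0; apply/negP; exact: irr_not_dvd1.
Qed.
End Irr.

Section CharP.
Variables (F : fieldType) (p : nat) (pF : p \in [pchar F]).
Local Notation Fa := (pPrimeCharType pF).
Variable t : Fa.
Hypothesis t0 : t != 0.
Hypothesis tnr : forall m, (0 < m)%N -> t ^+ m != 1.

Lemma transc (q : {poly 'F_p}) : q != 0 -> horner_alg t q != 0.
Proof.
move=> q0; apply/negP => /eqP hq.
have Hm : forall m, t ^+ m = horner_alg t ('X^m %% q).
  move=> m; have hX : horner_alg t 'X = t by apply: horner_algX.
  rewrite -{1}hX -rmorphXn {1}(divp_eq ('X^m) q) rmorphD rmorphM /=.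
  by rewrite hq mulr0 add0r.
pose N := #|{ffun 'I_(size q) -> 'F_p}|.
pose f (m : 'I_N.+1) : {ffun 'I_(size q) -> 'F_p} := [ffun i : 'I_(size q) => ('X^m %% q)`_i].
have nf : ~ injective f.
  by move=> /leq_card; rewrite card_ord ltnn.
have [i [j [ij fij]]] : exists i j, i != j /\ f i = f j.
  apply: NNPP => h; apply: nf => i j fij; apply: NNPP => /eqP ij.
  by apply: h; exists i, j.
have eXij : 'X^i %% q = 'X^j %% q.
  apply/polyP => l; case: (ltnP l (size q)) => lq.
    by have := congr1 (fun g : {ffun 'I_(size q) -> 'F_p} => g (Ordinal lq)) fij; rewrite !ffunE.
  by rewrite !nth_default // (leq_trans _ lq) // ltnW // ltn_modp.
have tij : t ^+ i = t ^+ j by rewrite !Hm eXij.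
clear fij eXij; wlog lt_ij : i j ij tij / (i < j)%N.
  move=> W; case: (ltngtP i j) => [h|h|/val_inj h]; first exact: (W i j).
    by apply: (W j i) => //; rewrite eq_sym.
  by move: ij; rewrite h eqxx.
have ji0 : (0 < j - i)%N by rewrite subn_gt0.
have := tnr ji0; move/negP; apply.
apply/eqP; apply: (mulfI (expf_neq0 i t0)).
rewrite -exprD (subnKC (ltnW lt_ij)) mulr1.
exact: esym.
Qed.

Lemma charp_indep k : exists u : 'I_k -> F, (forall j, u j != 0) /\
  forall w : 'I_k -> int, \prod_j u j ^ w j = 1 -> forall j, w j = 0.
Proof.
have [r [ir inj]] := irr_family 'F_p k.
pose u (j : 'I_k) : Fa := horner_alg t (r j).
have u0 : forall j, u j != 0.
  by move=> j; apply: transc; apply: irredp_neq0; apply: ir.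
exists u; split => // w h.
have h' : \prod_j (u j : Fa) ^ w j = 1 := h.
have := split_relation u0 h'.
rewrite /u -!(eq_bigr _ (fun j _ => rmorphXn _ _ _)) -!rmorph_prod => /eqP.
rewrite -subr_eq0 -rmorphB => /eqP hd.
have e : \prod_(j < k) r j ^+ zpos (w j) = \prod_(j < k) r j ^+ zneg (w j).
  apply/eqP; rewrite -subr_eq0; apply/negP => /negP/transc; rewrite hd.
  by move/negP; apply; apply/eqP.
have irr' : forall j : 'I_k, irreducible_poly (r j) by move=> j; apply: ir.
have inj' : forall i j : 'I_k, r i %= r j -> i = j.
  by move=> i j /inj h2; apply: val_inj; apply: h2.
move=> j; apply: zpos_neg0.
  apply: (@poly_indep _ _ (fun j : 'I_k => r j) (fun j => zpos (w j)) (fun j => zneg (w j))) => //.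
  by move=> l; apply: zpos_neg.
apply: (@poly_indep _ _ (fun j : 'I_k => r j) (fun j => zneg (w j)) (fun j => zpos (w j))) => //.
by move=> l; case: (zpos_neg (w l)); [right|left].
Qed.
End CharP.

Lemma field_finite (F : fieldType) (n k : nat) (d : 'I_k -> F) : (0 < n)%N ->
  (forall i, d i != 0) ->
  (forall a : F, a != 0 -> exists e : 'I_k -> int, a ^+ n = \prod_i d i ^ e i) ->
  exists s : seq F, forall a, a \in s.
Proof.
move=> n0 d0 He.
case: (classic (forall a : F, a != 0 -> exists m, (0 < m)%N /\ a ^+ m = 1)) => Ht.
  exact: torsion_finite n0 d0 He Ht.
exfalso.
have [t [t0 tnr]] : exists t : F, t != 0 /\ forall m, (0 < m)%N -> t ^+ m != 1.
  apply: NNPP => h; apply: Ht => a a0; apply: NNPP => h2; apply: h.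
  exists a; split => // m m0; apply/negP => /eqP am; apply: h2; exists m; split => //.
have [u [u0 ind]] : exists u : 'I_k.+1 -> F, (forall j, u j != 0) /\
    forall w : 'I_k.+1 -> int, \prod_j u j ^ w j = 1 -> forall j, w j = 0.
  case: (classic (forall m, (0 < m)%N -> m%:R != 0 :> F)) => hc.
    exact: char0_indep.
  have [m [m0 mz]] : exists m, (0 < m)%N /\ m%:R == 0 :> F.
    apply: NNPP => h; apply: hc => m m0; apply/negP => mz; apply: h; exists m; split => //.
  have [p pF] := natf0_pchar m0 mz.
  exact: (@charp_indep F p pF t t0 tnr).
have [w [[j wj] hw]] := @indep_contra F n k d u n0 d0 (fun j => He _ (u0 j)).
by move/eqP: wj; apply; apply: ind hw j.
Qed.

Section FinWedd.
Variable R : unitRingType.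
Variable s : seq R.
Hypothesis Hs : forall x : R, x \in s.
Definition FR : Type := R.
HB.instance Definition _ := GRing.UnitRing.on FR.
Definition FR_pick (x : FR) : nat := index x s.
Definition FR_unpick (n : nat) : option FR := Some (nth (0 : R) s n).
Lemma FR_pickK : pcancel FR_pick FR_unpick.
Proof. by move=> x; rewrite /FR_unpick /FR_pick nth_index. Qed.
HB.instance Definition _ := PCanIsCountable FR_pickK.
Lemma FR_enumP : Finite.axiom (undup s : seq FR).
Proof. by apply: Finite.uniq_enumP (undup_uniq _) _ => x; rewrite mem_undup Hs. Qed.
HB.instance Definition _ := isFinite.Build FR FR_enumP.

Lemma fin_divring_comm : is_division_ring R -> commutative (@GRing.mul R).
Proof.
move=> divR.
have dom : GRing.integral_domain_axiom FR.
  move=> x y xy0; apply/norP=> [[x0 y0]].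
  have := divR x x0 => xu.
  have := divR y y0 => yu.
  by move/negP: y0; apply; rewrite -(mulKr xu y) (_ : x * y = 0) // mulr0.
exact: (@finDomain_mulrC FR dom).
Qed.
End FinWedd.

Section Center.
Variable D : unitRingType.
Hypothesis divD : is_division_ring D.

Definition cpred : pred D := fun x => `[< central x >].

Lemma cpredP x : reflect (central x) (cpred x).
Proof. exact: asboolP. Qed.

Lemma central_inv (y : D) : central y -> central y^-1.
Proof.
move=> cy; have [/eqP->|yn0] := boolP (y == 0); first by move=> w; rewrite invr0 mulr0 mul0r.
move=> w; have yu := divD yn0.
by rewrite -{1}[w](mulrK yu) -cy !mulrA mulVr ?mul1r.
Qed.

Lemma cpred_divring : divring_closed cpred.
Proof.
split.
- by apply/cpredP=> y; rewrite mul1r mulr1.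
- move=> x y /cpredP cx /cpredP cy; apply/cpredP=> z.
  by rewrite mulrBl mulrBr cx cy.
- move=> x y /cpredP cx /cpredP cy; apply/cpredP=> z.
  by rewrite -mulrA (central_inv cy) mulrA cx mulrA.
Qed.

HB.instance Definition _ := GRing.isDivringClosed.Build D cpred cpred_divring.

Record ZD := MkZD { zval :> D; zvalP : cpred zval }.
HB.instance Definition _ := [isSub for zval].
HB.instance Definition _ := [Choice of ZD by <:].
HB.instance Definition _ := [SubChoice_isSubUnitRing of ZD by <:].

Lemma ZD_mulC : commutative (@GRing.mul ZD).
Proof. move=> [x px] [y py]; apply: val_inj => /=. by move/cpredP: px. Qed.
HB.instance Definition _ := GRing.PzRing_hasCommutativeMul.Build ZD ZD_mulC.

Lemma ZD_field : GRing.field_axiom ZD.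
Proof.
move=> x x0.
have : val x \is a GRing.unit by apply: divD; rewrite -(inj_eq val_inj) in x0.
by [].
Qed.
HB.instance Definition _ := GRing.ComUnitRing_isField.Build ZD ZD_field.

Lemma zvalV (x : ZD) : zval (x^-1) = (zval x)^-1. Proof. reflexivity. Qed.
Lemma zvalM (x y : ZD) : zval (x * y) = zval x * zval y. Proof. reflexivity. Qed.
Lemma zvalD (x y : ZD) : zval (x + y) = zval x + zval y. Proof. reflexivity. Qed.
Lemma zvalN (x : ZD) : zval (- x) = - zval x. Proof. reflexivity. Qed.
Lemma zval0 : zval (0 : ZD) = 0. Proof. reflexivity. Qed.
Lemma zval1 : zval (1 : ZD) = 1. Proof. reflexivity. Qed.
Lemma zvalC (a : ZD) (y : D) : zval a * y = y * zval a.
Proof. by case: a => a /= /cpredP. Qed.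
Lemma zval_sum (I : finType) (f : I -> ZD) : zval (\sum_i f i) = \sum_i zval (f i).
Proof.
by apply: (big_morph zval) => [x y|]; [exact: zvalD | exact: zval0].
Qed.
Lemma zval_eq0 (a : ZD) : (zval a == 0) = (a == 0).
Proof. by rewrite -zval0 (inj_eq val_inj). Qed.
Lemma mkZD (x : D) : central x -> {a : ZD | zval a = x}.
Proof. by move=> cx; exists (MkZD (introT (cpredP x) cx)). Qed.



Definition spans n (b : 'I_n -> D) :=
  forall y : D, exists c : 'I_n -> ZD, y = \sum_i zval (c i) * b i.

Section Span.
Variables (n : nat) (b : 'I_n -> D).
Hypothesis spb : spans b.
Hypothesis minb : forall m (b' : 'I_m -> D), spans b' -> (n <= m)%N.

Lemma coord_uniq0 (c : 'I_n -> ZD) : \sum_i zval (c i) * b i = 0 -> forall i, c i = 0.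
Proof.
move=> hc j; apply: NNPP => /eqP cj.
have key : spans (fun i : 'I_n.-1 => b (lift j i)).
  move=> y; have [e ->] := spb y.
  pose lam := e j * (c j)^-1.
  exists (fun i => e (lift j i) - lam * c (lift j i)).
  have hc' := hc; rewrite (bigD1_ord j) //= in hc'.
  rewrite (bigD1_ord j) //=.
  have bj : zval (c j) * b j = - \sum_(i < n.-1) zval (c (lift j i)) * b (lift j i).
    by apply/eqP; rewrite -addr_eq0 hc'.
  have -> : zval (e j) * b j = zval lam * (zval (c j) * b j).
    by rewrite mulrA -zvalM /lam -mulrA mulVf // mulr1.
  rewrite bj mulrN mulr_sumr -sumrN -big_split /=.
  apply: eq_bigr => i _.
  by rewrite mulrBl !mulrA addrC.
have := minb key; have : (0 < n)%N by apply: leq_ltn_trans (ltn_ord j).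
by case: (n) => // n' _; rewrite ltnn.
Qed.

Definition coord (y : D) : 'I_n -> ZD :=
  proj1_sig (constructive_indefinite_description _ (spb y)).

Lemma coordP y : y = \sum_i zval (coord y i) * b i.
Proof. by rewrite /coord; case: constructive_indefinite_description. Qed.

Lemma coord_uniq y (c : 'I_n -> ZD) : y = \sum_i zval (c i) * b i -> forall i, coord y i = c i.
Proof.
move=> hy i0; apply/eqP; rewrite -subr_eq0; apply/eqP.
apply: (@coord_uniq0 (fun i => coord y i - c i)); rewrite /=.
have -> : \sum_i zval (coord y i - c i) * b i
        = \sum_i zval (coord y i) * b i - \sum_i zval (c i) * b i.
  by rewrite -sumrB; apply: eq_bigr => i _; rewrite zvalD zvalN mulrBl.
by rewrite -coordP -hy subrr.
Qed.

Lemma coordZ (a : ZD) y j : coord (zval a * y) j = a * coord y j.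
Proof.
apply: (@coord_uniq _ (fun j => a * coord y j)); rewrite {1}(coordP y) mulr_sumr; apply: eq_bigr => i _.
by rewrite zvalM mulrA.
Qed.

Lemma coord_b i j : coord (b i) j = (j == i)%:R.
Proof.
apply: (@coord_uniq _ (fun j : 'I_n => (j == i)%:R)); rewrite (bigD1 i) //= eqxx zval1 mul1r big1 ?addr0 // => l li.
by rewrite (negbTE li) zval0 mul0r.
Qed.

Definition Mx (x : D) : 'M[ZD]_n := \matrix_(i, j) coord (x * b i) j.

Lemma mul_expand x z : x * z = \sum_j zval (\sum_l coord z l * Mx x l j) * b j.
Proof.
rewrite {1}(coordP z) mulr_sumr.
transitivity (\sum_l \sum_j zval (coord z l * Mx x l j) * b j).
  apply: eq_bigr => l _; rewrite mulrA -zvalC -mulrA {1}(coordP (x * b l)) mulr_sumr.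
  by apply: eq_bigr => j _; rewrite mxE zvalM mulrA.
rewrite exchange_big /=; apply: eq_bigr => j _.
by rewrite zval_sum mulr_suml.
Qed.

Lemma MxM x y : Mx (x * y) = Mx y *m Mx x.
Proof.
apply/matrixP => i j; rewrite !mxE -mulrA.
rewrite (coord_uniq (mul_expand x (y * b i))).
by apply: eq_bigr => l _; congr (_ * _); rewrite mxE.
Qed.

Lemma Mx_scal (a : ZD) : Mx (zval a) = a%:M.
Proof.
apply/matrixP => i j; rewrite !mxE coordZ coord_b eq_sym.
by rewrite mulr_natr.
Qed.

Definition dM x := \det (Mx x).

Lemma dMM x y : dM (x * y) = dM x * dM y.
Proof. by rewrite /dM MxM det_mulmx mulrC. Qed.

Lemma dM_scal (a : ZD) : dM (zval a) = a ^+ n.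
Proof. by rewrite /dM Mx_scal det_scalar. Qed.

Lemma dM1 : dM 1 = 1.
Proof. by rewrite -zval1 dM_scal expr1n. Qed.

Lemma dM_inv x : x != 0 -> dM x != 0 /\ dM x^-1 = (dM x)^-1.
Proof.
move=> x0; have xu := divD x0.
have h : dM x * dM x^-1 = 1 by rewrite -dMM mulrV // dM1.
have dx0 : dM x != 0 by apply: contra_eq_neq h => ->; rewrite mul0r eq_sym oner_neq0.
split => //; apply: (mulfI dx0); rewrite h mulfV //.
Qed.
End Span.

Fixpoint tup (s : seq ZD) (m : nat) : seq (seq ZD) :=
  if m is m'.+1 then [seq x :: t | x <- s, t <- tup s m'] else [:: [::]].

Lemma tupP (s : seq ZD) (t : seq ZD) : (forall x, x \in s) -> t \in tup s (size t).
Proof.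
move=> Hs; elim: t => [|x t IH] /=; first by rewrite inE.
by apply: (allpairs_f (fun x t => x :: t)).
Qed.

Lemma main_contra : (exists x y : D, x * y != y * x) -> weakly_locally_finite D ->
  ~ units_fin_gen D.
Proof.
move=> [x0 [y0 nc]] wlf [g [g0 gen]].
have nz_mul : forall x y : D, x != 0 -> y != 0 -> x * y != 0.
  move=> x y x0' y0'; have xu := divD x0'; have yu := divD y0'.
  apply/negP => /eqP xy0.
  have : (x * y) \is a GRing.unit by rewrite unitrMr.
  by rewrite xy0 unitr0.
have allg : forall x, gen_divring g x.
  move=> x P [P1 PB PM PV] Pg.
  have P0 : P 0 by rewrite -(subrr 1); apply: PB.
  have [->|x0'] := eqVneq x 0; first exact: P0.
  have := gen x x0' (fun y => P y /\ y != 0).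
  case => //.
  - by split => //; apply: oner_neq0.
  - by move=> u v [Pu u0] [Pv v0]; split; [apply: PM | apply: nz_mul].
  - by move=> u [Pu u0]; split; [apply: PV | rewrite invr_eq0].
  - by move=> u ug; split; [apply: Pg | apply: g0].
have [bs [_ spanbs]] := wlf g.
have ex_span : exists m, `[< exists b : 'I_m -> D, spans b >].
  exists (size bs); apply/asboolP; exists (fun i : 'I_(size bs) => bs`_i).
  move=> y.
  have [c [sc [cc ->]]] := spanbs y (allg y).
  have cen : forall i : 'I_(size bs), central c`_i.
    move=> i z; have ic : (i < size c)%N by rewrite sc.
    have [_ h] := cc c`_i (mem_nth 0 ic).
    exact: h (allg z).
  exists (fun i => proj1_sig (mkZD (cen i))); apply: eq_bigr => i _.
  by case: mkZD => a /= ->.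
case: (ex_minnP ex_span) => n /asboolP [b spb] minb'.
have minb : forall m (b' : 'I_m -> D), spans b' -> (n <= m)%N.
  by move=> m b' sb'; apply: minb'; apply/asboolP; exists b'.
have n0 : (0 < n)%N.
  rewrite lt0n; apply/negP => /eqP n0.
  have [c h] := spb 1; move: h; rewrite big1 => [/eqP|i _].
    by rewrite oner_eq0.
  by have := ltn_ord i; rewrite {2}n0.
pose k := size g.
pose d (i : 'I_k) : ZD := dM spb g`_i.
have g0' : forall i : 'I_k, g`_i != 0 by move=> i; apply: g0; apply: mem_nth.
have d0 : forall i, d i != 0 by move=> i; have [] := dM_inv spb minb (g0' i).
have He : forall a : ZD, a != 0 -> exists e : 'I_k -> int, a ^+ n = \prod_i d i ^ e i.
  move=> a a0; rewrite -(dM_scal spb minb).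
  have za0 : zval a != 0 by rewrite zval_eq0.
  have := gen (zval a) za0 (fun x => x != 0 /\ exists e : 'I_k -> int, dM spb x = \prod_i d i ^ e i).
  case => // [| u v [u0 [e eu]] [v0 [e' ev]] | u [u0 [e eu]] | u ug].
  - split; first exact: oner_neq0.
    by exists (fun _ => 0); rewrite (dM1 spb minb) big1.
  - split; first exact: nz_mul.
    exists (fun i => e i + e' i); rewrite (dMM spb minb) eu ev -big_split /=.
    by apply: eq_bigr => i _; rewrite expfzDr.
  - split; first by rewrite invr_eq0.
    exists (fun i => - e i); have [_ ->] := dM_inv spb minb u0; rewrite eu -prodfV.
    by apply: eq_bigr => i _; rewrite invr_expz.
  - split; first exact: g0.
    have iu : (index u g < k)%N by rewrite index_mem.
    exists (fun i : 'I_k => ((i == Ordinal iu) : nat)%:Z).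
    rewrite (bigD1 (Ordinal iu)) //= eqxx big1 ?mulr1.
      by rewrite /d /= nth_index.
    by move=> i /negbTE ->.
have [sF HsF] := field_finite n0 d0 He.
pose LD := [seq \sum_(i < n) zval (nth 0 t i) * b i | t <- tup sF n].
have HLD : forall y, y \in LD.
  move=> y; apply/mapP; exists (map (coord spb y) (enum 'I_n)).
    by have := tupP (map (coord spb y) (enum 'I_n)) HsF; rewrite size_map size_enum_ord.
  rewrite {1}(coordP spb y); apply: eq_bigr => i _.
  by rewrite (nth_map i) ?size_enum_ord // nth_ord_enum.
have := fin_divring_comm HLD divD x0 y0.
by move/eqP: nc.
Qed.
End Center.


Theorem corollary5p13 (D : unitRingType) :
  is_division_ring D ->
  (exists x y : D, x * y != y * x) ->
  algebraic_over_center D ->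
  weakly_locally_finite D ->
  ~ units_fin_gen D.
Proof.
move=> divD nc _ wlf.
exact: (@main_contra D divD nc wlf).
Qed.
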